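(* For every connected graph $G$ of order $n$, $\chi_{\mu_2}(G)\le \lceil n/2\rceil$. Moreover, this bound is sharp, i.e., there are connected graphs attaining equality.
   Context: A $u,v$-geodesic is a shortest $u,v$-path. A set $M\subseteq V(G)$ is a $2$-distance mutual-visibility set if for every two vertices $u,v\in M$ there exists a $u,v$-geodesic of length at most $2$ none of whose internal vertices lies in $M$. $\chi_{\mu_2}(G)$ is the minimum cardinality of a partition of $V(G)$ into $2$-distance mutual-visibility sets. *)

(* Defs.v *)
From mathcomp Require Import all_boot.
From mathcomp Require Import boolp.
Set Implicit Arguments. Unset Strict Implicit. Unset Printing Implicit Defensive.

(* A finite simple graph: vertex type T : finType, adjacency e : rel T,
   assumed symmetric and irreflexive (hypotheses in the theorem). *)

Definition connected_graph (T : finType) (e : rel T) : Prop :=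
  forall x y : T, connect e x y.

Definition is_walk (T : finType) (e : rel T) (u v : T) (p : seq T) : bool :=
  path e u p && (last u p == v).

Definition is_geodesic (T : finType) (e : rel T) (u v : T) (p : seq T) : Prop :=
  is_walk e u v p /\ forall q, is_walk e u v q -> size p <= size q.

(* internal vertices of the walk u :: p (all vertices except both ends) *)
Definition internal (T : finType) (u : T) (p : seq T) : seq T :=
  behead (belast u p).

Definition dist2_mv_set (T : finType) (e : rel T) (M : {set T}) : Prop :=
  forall u v, u \in M -> v \in M ->
    exists p, is_geodesic e u v p /\ size p <= 2 /\
              all (fun x => x \notin M) (internal u p).

Definition dist2_mv_partition (T : finType) (e : rel T) (P : {set {set T}}) : Prop :=
  partition P [set: T] /\ forall M, M \in P -> dist2_mv_set e M.

(* chi_{mu_2}(G): minimum cardinality of such a partition.  The partition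
   into singletons always qualifies and has #|T| blocks, so #|T| is a safe
   default for the minimum. *)
Definition chi_mu2 (T : finType) (e : rel T) : nat :=
  \big[minn/#|T|]_(P : {set {set T}} | `[< dist2_mv_partition e P >]) #|P|.

(* Main.v *)
Require Import Defs.
From mathcomp Require Import all_boot zify.
From mathcomp Require boolp.
Set Implicit Arguments. Unset Strict Implicit. Unset Printing Implicit Defensive.

Section Vis.
Variables (T : finType) (e : rel T).
Hypotheses (esym : symmetric e) (eirr : irreflexive e).

Lemma vis_pair a b (M : {set T}) :
  (a == b) || e a b || [exists w, e a w && e w b && (w \notin M)] ->
  exists p, is_geodesic e a b p /\ size p <= 2 /\
            all (fun x => x \notin M) (internal a p).
Proof.
case: (a =P b) => [<- _|nab] /=.
  exists [::]; split; last by [].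
  by split; [rewrite /is_walk /= eqxx | ].
case eab: (e a b) => /=.
  exists [:: b]; split; last by [].
  split; first by rewrite /is_walk /= eab eqxx.
  case=> [|c q] //; rewrite /is_walk /= => /eqP ab; by case: nab.
case/existsP => w /andP[/andP[eaw ewb] wM].
exists [:: w; b]; split; last by rewrite /internal /= wM.
split; first by rewrite /is_walk /= eaw ewb eqxx.
case=> [|c [|d q]] //; rewrite /is_walk /=.
  by move=> /eqP ab; case: nab.
by move=> /andP[/andP[eac _] /eqP cb]; rewrite -cb eac in eab.
Qed.

Lemma dist2_pair u v :
  (u == v) || e u v || [exists w, e u w && e w v] -> dist2_mv_set e [set u; v].
Proof.
move=> H a b; rewrite !inE => Ha Hb.
apply: vis_pair.
have H' : forall x y, x \in [set u; v] -> y \in [set u; v] ->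
   (x == y) || e x y || [exists w, e x w && e w y] ->
   (x == y) || e x y || [exists w, e x w && e w y && (w \notin [set x; y])].
  move=> x y _ _ Hxy.
  case: (x =P y) => [->|nxy] //=.
  case exy: (e x y); first by [].
  move: Hxy; rewrite exy (introF eqP nxy) /= => /existsP [w /andP[exw ewy]].
  apply/existsP; exists w; rewrite exw ewy !inE /=.
  apply/negP => /orP[/eqP E|/eqP E]; subst w; [by rewrite eirr in exw|by rewrite eirr in ewy].
case/orP: Ha => /eqP ->; case/orP: Hb => /eqP ->; rewrite ?eqxx //.
- case: (u =P v) => [->|nuv]; rewrite ?eqxx //=.
  have := H' u v; rewrite !inE !eqxx orbT /= => /(_ isT isT H).
  by rewrite (introF eqP nuv).
- case: (u =P v) => [->|nuv]; rewrite ?eqxx //=.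
  have Hs : (v == u) || e v u || [exists w, e v w && e w u].
    case/orP: H => [/orP[/eqP->|euv]|]; first by rewrite eqxx.
      by rewrite esym euv orbT.
    case/existsP=> w /andP[a1 a2]; apply/orP; right; apply/existsP; exists w.
    by rewrite esym a2 esym a1.
  have := H' v u; rewrite !inE !eqxx orbT /= => /(_ isT isT Hs).
  have nvu : v != u by apply/eqP => E; apply: nuv.
  rewrite (negbTE nvu) /=.
  have -> : [set v; u] = [set u; v] by rewrite setUC.
  done.
Qed.
End Vis.

Section Height.
Variables (T : finType) (e : rel T) (r : T).
Hypothesis conn : forall x, connect e x r.

Fixpoint reach (k : nat) (x : T) : bool :=
  if k is k'.+1 then (x == r) || [exists y, e x y && reach k' y] else x == r.

Lemma reach_path x p : path e x p -> last x p = r -> reach (size p) x.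
Proof.
elim: p x => [|y p IH] x /=; first by move=> _ ->; rewrite eqxx.
move=> /andP[exy py] l; apply/orP; right; apply/existsP; exists y.
by rewrite exy IH.
Qed.

Lemma hex x : exists k, reach k x.
Proof.
have /connectP [p pp lp] := conn x.
by exists (size p); apply: reach_path; rewrite -?lp.
Qed.

Definition h x := ex_minn (hex x).

Lemma h_spec x : reach (h x) x /\ forall k, reach k x -> h x <= k.
Proof. rewrite /h; case: ex_minnP => m Hm Hmin; split=> //. Qed.

Definition par x := odflt x [pick y | e x y && reach (h x).-1 y].

Lemma par_spec x : x != r -> e x (par x) /\ h x = (h (par x)).+1.
Proof.
move=> xr; have [R M] := h_spec x.
case Ehx: (h x) R => [|k]; first by rewrite /= (negbTE xr).
rewrite /= (negbTE xr) /= => /existsP [y /andP[exy ry]].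
rewrite /par Ehx /=.
case: pickP => [z /andP[exz rz]|none]; last by have := none y; rewrite exy ry.
split=> //.
have [Rz Mz] := h_spec z.
have h1 := Mz _ rz.
have h2 : reach (h z).+1 x by rewrite /= (negbTE xr) /=; apply/existsP; exists z; rewrite exz Rz.
have := M _ h2; rewrite Ehx => h3.
apply/eqP; rewrite eqn_leq; apply/andP; split => //.
Qed.

End Height.

Section Pairing.
Variables (T : finType) (e : rel T) (r : T).
Hypotheses (esym : symmetric e) (eirr : irreflexive e).
Hypothesis conn : forall x, connect e x r.

Local Notation p_ := (par conn).
Local Notation h_ := (h conn).

Definition pclosed (S : {set T}) := forall x, x \in S -> x != r -> p_ x \in S.

Definition goodP (P : {set {set T}}) (S : {set T}) : Prop :=
  partition P S /\ (forall B, B \in P -> dist2_mv_set e B) /\ #|P| <= uphalf #|S|.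

Lemma good_small (S : {set T}) : #|S| <= 1 -> exists P, goodP P S.
Proof.
case: (set_0Vmem S) => [->|[x xS]] cS.
  exists set0; split; first by rewrite partition_set0.
  by split; [move=> B; rewrite inE | rewrite cards0].
have SE : [set x] = S.
  by apply/eqP; rewrite eqEcard sub1set xS cards1 cS.
exists [set [set x]]; split.
  have := @partitionU1 _ set0 set0 [set x].
  rewrite partition_set0 eqxx setU0 setU0 -SE; apply => //.
    by apply/set0Pn; exists x; rewrite inE.
  by rewrite disjoint_sym; apply: eq_disjoint0 => y; rewrite inE.
split; last by rewrite -SE cards1 cards1.
move=> B; rewrite inE => /eqP ->; rewrite -[[set x]]setUid.
by apply: dist2_pair => //; rewrite eqxx.
Qed.

Lemma good_step (S : {set T}) a b P' : a \in S -> b \in S -> a != b ->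
  (e a b || [exists w, e a w && e w b]) ->
  goodP P' (S :\ a :\ b) -> exists P, goodP P S.
Proof.
move=> aS bS ab Hab [pP [dP cP]].
have bSa : b \in S :\ a by rewrite !inE eq_sym ab.
have cS : #|S| = (#|S :\ a :\ b|).+2.
  by rewrite (cardsD1 a S) aS (cardsD1 b (S :\ a)) bSa.
exists ([set a; b] |: P'); split.
  have -> : S = [set a; b] :|: (S :\ a :\ b).
    apply/setP => x; rewrite !inE.
    case: (x =P a) => [->|_]; first by rewrite aS.
    case: (x =P b) => [->|_] //=; by rewrite bS.
  apply: partitionU1 => //.
    by apply/set0Pn; exists a; rewrite !inE eqxx.
  rewrite disjoint_subset; apply/subsetP => x; rewrite !inE => /orP[]/eqP ->; by rewrite eqxx /= ?andbF.
split.
  move=> B; rewrite !inE => /orP[/eqP ->|]; last exact: dP.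
  by apply: dist2_pair => //; rewrite (negbTE ab) /= Hab.
rewrite cardsU1 cS /=.
by rewrite -add1n; apply: leq_add; [exact: leq_b1 | exact: cP].
Qed.

Lemma main n (S : {set T}) : #|S| <= n -> pclosed S -> exists P, goodP P S.
Proof.
elim: n S => [|n IH] S cS clS.
  by apply: good_small; lia.
case: (set_0Vmem (S :\ r)) => [S0|[v0 Hv0]].
  apply: good_small; rewrite (cardsD1 r S) S0 cards0; by case: (_ \in _).
case: (arg_maxnP h_ Hv0) => v vS vmax.
have : v \in S :\ r := vS.
rewrite !inE => /andP[vr vS'].
have [evp hvp] := par_spec conn vr.
set p := p_ v in evp hvp.
have pS : p \in S by apply: clS.
have vp : v != p by apply/eqP => E; rewrite -E eirr in evp.
have nochild : forall y x, h_ y = h_ v -> x \in S -> x != r -> p_ x != y.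
  move=> y x hy xS xr; apply/eqP => E.
  have [_ hx] := par_spec conn xr.
  have xS2 : x \in S :\ r by rewrite !inE xr xS.
  have := vmax x xS2.
  by rewrite hx E hy; lia.
case: (pickP [pred w in S :\ r | (w != v) && (p_ w == p)]) => [w|nw].
  rewrite /= !inE => /andP[/andP[wr wS] /andP[wv /eqP pw]].
  have [_ hw] := par_spec conn wr.
  have hwv : h_ w = h_ v by rewrite hw pw hvp.
  have [P' HP'] : exists P', goodP P' (S :\ v :\ w).
    apply: (IH).
      move: cS; rewrite (cardsD1 v S) vS' (cardsD1 w (S :\ v)) !inE wv wS /=; lia.
    move=> x; rewrite !inE => /andP[xw /andP[xv xS]] xr.
    rewrite (nochild w x hwv xS xr) (nochild v x erefl xS xr) /=.
    exact: clS.
  apply: (good_step vS' wS _ _ HP'); first by rewrite eq_sym.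
  apply/orP; right; apply/existsP; exists p; by rewrite evp -pw esym (par_spec conn wr).1.
have [P' HP'] : exists P', goodP P' (S :\ v :\ p).
  apply: (IH).
    move: cS; rewrite (cardsD1 v S) vS' (cardsD1 p (S :\ v)) !inE eq_sym vp pS /=; lia.
  move=> x; rewrite !inE => /andP[xp /andP[xv xS]] xr.
  rewrite (nochild v x erefl xS xr) /=.
  have -> : p_ x != p.
    apply/eqP => E; have := nw x; rewrite /= !inE xr xS xv E eqxx //.
  exact: clS.
apply: (good_step vS' pS vp _ HP').
by rewrite evp.
Qed.

End Pairing.

Lemma bigmin_le_seq (I : eqType) (s : seq I) (F : I -> nat) d i0 :
  i0 \in s -> \big[minn/d]_(i <- s) F i <= F i0.
Proof.
elim: s => [|x s IH] //; rewrite in_cons big_cons => /orP[/eqP->|/IH H].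
  exact: geq_minl.
exact: leq_trans (geq_minr _ _) H.
Qed.

Lemma bigmin_le (I : finType) (P : pred I) (F : I -> nat) d i0 :
  P i0 -> \big[minn/d]_(i | P i) F i <= F i0.
Proof.
move=> Pi0; rewrite -big_filter; apply: bigmin_le_seq.
by rewrite mem_filter Pi0 mem_index_enum.
Qed.

Lemma part1 (T : finType) (e : rel T) :
  symmetric e -> irreflexive e -> connected_graph e -> chi_mu2 e <= uphalf #|T|.
Proof.
move=> esym eirr conn.
case: (pickP (@predT T)) => [r _|none].
  have conn' : forall x, connect e x r by move=> x; exact: conn.
  have [P [pP [dP cP]]] := main (conn:=conn') esym eirr (leqnn #|[set: T]|) (fun x _ _ => in_setT _).
  rewrite -cardsT; apply: (leq_trans _ cP).
  rewrite /chi_mu2; apply: bigmin_le.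
  by apply: boolp.asboolT; split.
have c0 : #|T| = 0 by apply: eq_card0 => x; exact: none.
rewrite c0 /chi_mu2.
apply: (big_ind (fun x => x <= 0)); first by rewrite c0.
  by move=> x y; rewrite !leqn0 => /eqP-> /eqP->.
move=> P /boolp.asboolW [pP _].
have T0 : [set: T] = set0 by apply/setP => x; have := none x.
by move: pP; rewrite T0 partition_set0 => /eqP ->; rewrite cards0.
Qed.

Definition pathg n : rel 'I_n :=
  fun i j => ((nat_of_ord i).+1 == nat_of_ord j) || ((nat_of_ord j).+1 == nat_of_ord i).
Arguments pathg n : clear implicits.

Lemma pathg_sym n : symmetric (pathg n).
Proof. by move=> i j; rewrite /pathg orbC. Qed.

Lemma pathg_irr n : irreflexive (pathg n).
Proof. by move=> i; rewrite /pathg orbb; apply/negbTE/negP => /eqP; lia. Qed.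

Lemma pathg_conn n : connected_graph (pathg n).
Proof.
have H : forall k (i j : 'I_n), nat_of_ord j = nat_of_ord i + k -> connect (pathg n) i j.
  elim=> [|k IH] i j hj.
    by have -> : j = i by apply: ord_inj; rewrite hj addn0.
  have lt : nat_of_ord i + k < n by have := ltn_ord j; lia.
  apply: connect_trans (IH i (Ordinal lt) erefl) (connect1 _).
  by rewrite /pathg /= hj addnS eqxx.
move=> x y; case: (leqP (nat_of_ord x) (nat_of_ord y)) => hxy.
  by apply: (H (nat_of_ord y - nat_of_ord x)); lia.
rewrite (sym_connect_sym (@pathg_sym n)).
by apply: (H (nat_of_ord x - nat_of_ord y)); lia.
Qed.

Lemma pathg_fact n (M : {set 'I_n}) u v : dist2_mv_set (pathg n) M ->
  u \in M -> v \in M -> forall z, z \in M ->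
  [/\ nat_of_ord v <= nat_of_ord u + 2, nat_of_ord u <= nat_of_ord v + 2,
      (nat_of_ord v = nat_of_ord u + 2 -> nat_of_ord z <> nat_of_ord u + 1) &
      (nat_of_ord u = nat_of_ord v + 2 -> nat_of_ord z <> nat_of_ord v + 1)].
Proof.
move=> D uM vM z zM.
have [p [[/andP [pp /eqP lp] _] [sp ip]]] := D u v uM vM.
case: p pp lp sp ip => [|x [|y [|w q]]] //=.
- by move=> _ ->; split; lia.
- rewrite /pathg andbT => /orP[]/eqP h1 h2 _ _; subst x; split; lia.
- rewrite /pathg andbT => /andP[/orP[]/eqP h1 /orP[]/eqP h2] h3 _;
  rewrite /internal /= andbT => xM; subst y;
  (have zx : nat_of_ord z <> nat_of_ord x by move=> E; move: xM; rewrite -(ord_inj E) zM);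
  split; lia.
Qed.

Lemma pathg_block n (M : {set 'I_n}) : dist2_mv_set (pathg n) M -> #|M| <= 2.
Proof.
move=> D; rewrite leqNgt; apply/card_gt2P => -[a [b [c [[aM bM cM] [ab bc ca]]]]].
have ab' : nat_of_ord a <> nat_of_ord b by move=> /ord_inj /eqP; rewrite (negbTE ab).
have bc' : nat_of_ord b <> nat_of_ord c by move=> /ord_inj /eqP; rewrite (negbTE bc).
have ca' : nat_of_ord c <> nat_of_ord a by move=> /ord_inj /eqP; rewrite (negbTE ca).
have := pathg_fact D aM bM aM; have := pathg_fact D aM bM bM; have := pathg_fact D aM bM cM.
have := pathg_fact D aM cM aM; have := pathg_fact D aM cM bM; have := pathg_fact D aM cM cM.
have := pathg_fact D bM cM aM; have := pathg_fact D bM cM bM; have := pathg_fact D bM cM cM.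
move=> [? ? ? ?] [? ? ? ?] [? ? ? ?] [? ? ? ?] [? ? ? ?] [? ? ? ?] [? ? ? ?] [? ? ? ?] [? ? ? ?].
lia.
Qed.

Lemma pathg_lower n : uphalf n <= chi_mu2 (pathg n).
Proof.
rewrite /chi_mu2; apply: (big_ind (fun x => uphalf n <= x)).
- rewrite card_ord uphalf_half; have := odd_double_half n.
  case: (odd n) => /=; rewrite -muln2; lia.
- by move=> x y hx hy; rewrite leq_min hx hy.
move=> P /boolp.asboolW [pP dP].
have := card_partition pP; rewrite cardsT card_ord => hn.
have : n <= #|P| * 2.
  rewrite {1}hn -sum_nat_const; apply: leq_sum => B BP.
  exact: pathg_block (dP B BP).
rewrite uphalf_half; have := odd_double_half n.
case: (odd n) => /=; rewrite -muln2; lia.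
Qed.

Theorem theorem3p1 :
  (forall (T : finType) (e : rel T),
      symmetric e -> irreflexive e -> connected_graph e ->
      chi_mu2 e <= uphalf #|T|)
  /\
  (forall n : nat, 0 < n ->
      exists e : rel 'I_n,
        [/\ symmetric e, irreflexive e, connected_graph e &
            chi_mu2 e = uphalf n]).
Proof.
split; first exact: part1.
move=> n _; exists (pathg n); split.
- exact: pathg_sym.
- exact: pathg_irr.
- exact: pathg_conn.
apply/eqP; rewrite eqn_leq pathg_lower andbT.
have := part1 (@pathg_sym n) (@pathg_irr n) (@pathg_conn n).
by rewrite card_ord.
Qed.
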